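(* Let $n\ge1$ and $A\subseteq\Omega_n$. Then $\mu_{n+1}(A\times\{0,1\})=\mu_n(A)$.
   Context: For $n\ge1$, $\Omega_n$ is the set of strings $\omega=\alpha_0\alpha_1\cdots\alpha_n$ with $\alpha_k\in\{0,1\}$, $\alpha_0=0$. For $\omega=\alpha_0\cdots\alpha_n$, $\omega'=\alpha'_0\cdots\alpha'_n\in\Omega_n$ let $D^n(\omega,\omega')=2^{-n}\prod_{k=1}^n i^{|\alpha_k-\alpha_{k-1}|}\prod_{k=1}^n i^{-|\alpha'_k-\alpha'_{k-1}|}\,\delta_{\alpha_n\alpha'_n}$ ($i=\sqrt{-1}$), and for $A\subseteq\Omega_n$ let $\mu_n(A)=\sum_{\omega,\omega'\in A}D^n(\omega,\omega')$. For $A\subseteq\Omega_n$, $A\times\{0,1\}=\{\omega0,\omega1:\omega\in A\}\subseteq\Omega_{n+1}$, where $\omega a$ is the string obtained by appending $a$ to the right of $\omega$. *)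

(* Defs.v *)
From mathcomp Require Import all_boot all_algebra all_field.
Set Implicit Arguments. Unset Strict Implicit. Unset Printing Implicit Defensive.
Import GRing.Theory Num.Theory.
Local Open Scope ring_scope.

(* A string alpha_0 alpha_1 ... alpha_n is an (n.+1)-tuple of booleans
   (false = 0, true = 1); alpha_k = nth false w k. *)
Definition str (n : nat) := (n.+1).-tuple bool.

Definition Omega (n : nat) : {set str n} :=
  [set w : str n | nth false w 0 == false].

Definition jump (n : nat) (w : str n) (k : nat) : nat :=
  `|(nth false w k : nat)%:Z - (nth false w k.-1 : nat)%:Z|%N.

Definition D (n : nat) (w w' : str n) : algC :=
  (2%:R ^- n) *
  (\prod_(1 <= k < n.+1) 'i ^+ jump w k) *
  (\prod_(1 <= k < n.+1) 'i ^- jump w' k) *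
  ((nth false w n == nth false w' n)%:R).

Definition mu (n : nat) (A : {set str n}) : algC :=
  \sum_(w in A) \sum_(w' in A) D w w'.

Definition extend (n : nat) (A : {set str n}) : {set str n.+1} :=
  [set (rcons_tuple w a : str n.+1) | w in A, a in [set: bool]].

(* Main.v *)
Require Import Defs.
From mathcomp Require Import all_boot all_algebra all_field.
Local Open Scope ring_scope.
Import GRing.Theory Num.Theory.
From mathcomp Require Import ring.

Lemma nth_rc n (u : str n) (a : bool) k :
  nth false (rcons_tuple u a : str n.+1) k =
  if (k < n.+1)%N then nth false u k else if k == n.+1 then a else false.
Proof. by rewrite /= nth_rcons size_tuple. Qed.

Lemma jump_rc n (u : str n) (a : bool) k : (k < n.+1)%N ->
  jump (rcons_tuple u a : str n.+1) k = jump u k.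
Proof.
move=> hk; rewrite /jump !nth_rc hk.
by have -> : (k.-1 < n.+1)%N by case: k hk => //= k hk; apply: ltnW.
Qed.

Lemma jump_last n (u : str n) (a : bool) :
  jump (rcons_tuple u a : str n.+1) n.+1 =
  `|(a : nat)%:Z - (nth false u n : nat)%:Z|%N.
Proof. by rewrite /jump !nth_rc ltnn eqxx /= ltnSn. Qed.

Lemma keyD n (u u' : str n) :
  \sum_(a : bool) \sum_(a' : bool)
     D (rcons_tuple u a : str n.+1) (rcons_tuple u' a') = D u u'.
Proof.
have E : forall (v : str n) (a : bool) (e : nat -> algC),
  \prod_(1 <= k < n.+2) e (jump (rcons_tuple v a : str n.+1) k) =
  (\prod_(1 <= k < n.+1) e (jump v k)) *
    e `|(a : nat)%:Z - (nth false v n : nat)%:Z|%N.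
  move=> v a e; rewrite big_nat_recr //= jump_last; congr (_ * _).
  by apply: eq_big_nat => k /andP[_ hk]; rewrite jump_rc.
rewrite /D.
rewrite !big_bool /= !(E u _ (fun j => 'i ^+ j)) !(E u' _ (fun j => 'i ^- j)) !nth_rc ltnn eqxx.
set P := \prod_(1 <= k < n.+1) _.
set Q := \prod_(1 <= k < n.+1) _.
case: (nth false u n); case: (nth false u' n) => /=.
all: rewrite !eqxx /= ?expr0 ?expr1 ?invr1 ?mulr1 ?mulr0 ?addr0 ?add0r invCi.
all: have hi : 'i * 'i = -1 :> algC by rewrite -expr2 sqrCi.
all: rewrite exprS invfM.
all: have h2 : (2:algC) != 0 by rewrite pnatr_eq0.
all: have hE : forall X : algC, X * (P * 'i) * (Q * - 'i) = X * P * Q by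
  move=> X; transitivity (X * P * Q * (- ('i * 'i))); [ring | rewrite hi opprK mulr1].
all: rewrite ?hE; field; by rewrite expf_neq0.
Qed.

Lemma sum_ext n (A : {set str n}) (F : str n.+1 -> algC) :
  \sum_(x in extend A) F x = \sum_(w in A) \sum_(a : bool) F (rcons_tuple w a).
Proof.
rewrite /extend curry_imset2X big_imset /=; last first.
  move=> [w a] [w' a'] _ _ /= /(congr1 val) /= /rcons_inj [/val_inj -> ->].
  by [].
under [RHS]eq_bigr do rewrite (big_mkcond (fun a : bool => true)).
rewrite (pair_big_dep (fun w => w \in A) (fun _ a => true)
   (fun w a => F (rcons_tuple w a))) /=.
by apply: eq_big => -[w a] /=; rewrite ?in_setX ?in_setT ?andbT.
Qed.

Theorem lemma3p1 (n : nat) (A : {set str n}) :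
  (1 <= n)%N -> A \subset Omega n -> mu (extend A) = mu A.
Proof.
move=> _ _; rewrite /mu sum_ext.
apply: eq_bigr => w _.
under eq_bigr do rewrite sum_ext.
rewrite exchange_big /=.
apply: eq_bigr => w' _.
rewrite -(keyD _ w w').
apply: eq_bigr => a _.
by [].
Qed.
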